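(* Let $\mathcal{F}$ be a multidiforest. Then the complex of directed trees $DT(\mathcal{F})$ is vertex decomposable.
   Context: A multidigraph $G$ consists of finite sets $V$ (vertices) and $E$ (edges) with maps $s,t:E\to V$ (source and target); distinct edges may have the same source and target. Its underlying graph $G^{un}$ has vertex set $V$, with $u,v$ adjacent iff some edge $e$ has $\{s(e),t(e)\}=\{u,v\}$ (in particular a loop $s(e)=t(e)$ makes $G^{un}$ have a loop). $G$ is a multidiforest if $G^{un}$ is a (simple) forest. A directed cycle in $G$ is a connected subgraph $C$ in which every vertex of $C$ is the source of exactly one edge of $C$ and the target of exactly one edge of $C$. A directed forest is a multidigraph with no directed cycle in which distinct edges have distinct targets. The complex of directed trees $DT(G)$ is the simplicial complex on $E$ whose simplices are the subsets $\sigma\subseteq E$ such that the subgraph with edge set $\sigma$ is a directed forest. For a simplicial complex $K$ and a vertex $v$, $\mathrm{lk}(v,K)=\{\tau\in K: v\notin\tau,\ \tau\cup\{v\}\in K\}$ and $\mathrm{del}(v,K)=\{\tau\in K: v\notin\tau\}$. A simplicial complex $K$ is vertex decomposable if $K$ is a simplex (the set of all subsets of a finite set, including $\{\emptyset\}$), or $K$ contains a vertex $v$ such that (i) both $\mathrm{lk}(v,K)$ and $\mathrm{del}(v,K)$ are vertex decomposable, and (ii) every facet (maximal simplex) of $\mathrm{del}(v,K)$ is a facet of $K$. *)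

(* Defs.v *)
From mathcomp Require Import all_boot.
Set Implicit Arguments. Unset Strict Implicit. Unset Printing Implicit Defensive.

Section Multidigraph.
Variables (V E : finType) (s t : E -> V).

Definition un_adj : rel V :=
  fun u v => [exists e, ((s e == u) && (t e == v)) || ((s e == v) && (t e == u))].

(* G^un is a simple forest: no loops and no cycle (a closed walk through at
   least 3 pairwise distinct vertices). *)
Definition multidiforest : Prop :=
  (forall v, ~~ un_adj v v) /\
  ~ (exists p : seq V, [&& 3 <= size p, uniq p & path.cycle un_adj p]).

Definition adj_in (D : {set E}) : rel V :=
  fun x y => [exists e in D, ((s e == x) && (t e == y)) || ((s e == y) && (t e == x))].

Definition is_dicycle (W : {set V}) (D : {set E}) : bool :=
  [&& W != set0,
      [forall e in D, (s e \in W) && (t e \in W)],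
      [forall v in W, (#|[set e in D | s e == v]| == 1)
                      && (#|[set e in D | t e == v]| == 1)] &
      [forall x in W, forall y in W, connect (adj_in D) x y]].

Definition directed_forest (sigma : {set E}) : bool :=
  ~~ [exists W : {set V}, exists D : {set E}, (D \subset sigma) && is_dicycle W D]
  && [forall e1 in sigma, forall e2 in sigma, (t e1 == t e2) ==> (e1 == e2)].

Definition DT : {set {set E}} := [set sigma | directed_forest sigma].

End Multidigraph.

Section Complexes.
Variable E : finType.

Definition lk (v : E) (K : {set {set E}}) : {set {set E}} :=
  [set tau in K | (v \notin tau) && (v |: tau \in K)].

Definition del (v : E) (K : {set {set E}}) : {set {set E}} :=
  [set tau in K | v \notin tau].

Definition is_facet (F : {set E}) (K : {set {set E}}) : Prop :=
  F \in K /\ (forall G, G \in K -> F \subset G -> G = F).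

Inductive vertex_decomposable : {set {set E}} -> Prop :=
| vd_simplex (A : {set E}) : vertex_decomposable (powerset A)
| vd_shed (K : {set {set E}}) (v : E) :
    [set v] \in K ->
    vertex_decomposable (lk v K) ->
    vertex_decomposable (del v K) ->
    (forall F, is_facet F (del v K) -> is_facet F K) ->
    vertex_decomposable K.

End Complexes.

(* Main.v *)
Require Import Defs.
From mathcomp Require Import all_boot.
Set Implicit Arguments. Unset Strict Implicit. Unset Printing Implicit Defensive.

Section Walk.
Variables (V E : finType) (s t : E -> V).
Hypothesis HF : multidiforest s t.

Lemma path_iota (r : rel nat) (Hr : forall k, r k k.+1) n i : path r i (iota i.+1 n).
Proof. elim: n i => //= n IH i; rewrite Hr; exact: IH. Qed.

Lemma last_iota n i : last i (iota i.+1 n) = i + n.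
Proof. elim: n i => [|n IH] i /=; first by rewrite addn0. by rewrite IH addnS. Qed.

Lemma nb_walk (w : nat -> V) :
  (forall i, un_adj s t (w i) (w i.+1)) -> (forall i, w i.+2 != w i) -> False.
Proof.
move=> Hadj Hnb.
have key : forall d i, 0 < d -> w (i + d) = w i -> False.
  move=> d; elim: d {-2}d (leqnn d) => [|n IH] d Hd i Hd0 Heq.
    by move: Hd Hd0; rewrite leqn0 => /eqP->.
  case: (boolP (uniq (map w (iota i d)))) => [Hu | /(uniqPn (w 0))].
  - case: HF => Hloop Hcyc; apply: Hcyc; exists (map w (iota i d)).
    rewrite Hu size_map size_iota /=.
    case: d Hd Hd0 Heq Hu => // d' Hd _ Heq Hu.
    have Hcy : path.cycle (un_adj s t) (map w (iota i d'.+1)).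
      rewrite /= rcons_path path_map path_iota //= last_map last_iota.
      by rewrite -Heq addnS; exact: Hadj.
    rewrite Hcy andbT.
    case: d' Hd Heq Hu Hcy => [|[|d'']] // _ Heq _ _.
      by move: (Hloop (w i)); rewrite -{2}Heq addn1 Hadj.
    by move: (Hnb i); rewrite -Heq addn2 eqxx.
  - case=> i1 [j1 [Hij Hj]]; rewrite size_map size_iota in Hj.
    rewrite !(nth_map 0) ?size_iota ?(ltn_trans Hij) // !nth_iota ?(ltn_trans Hij) //.
    move=> Heq'; apply: (IH (j1 - i1) _ (i + i1)).
    - rewrite -ltnS; apply: leq_trans Hd; apply: leq_ltn_trans (leq_subr _ _) Hj.
    - by rewrite subn_gt0.
    - by rewrite -addnA subnKC ?(ltnW Hij) // Heq'.
pose N := #|V|.+1.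
have : ~~ uniq (map w (iota 0 N)).
  apply/negP => /card_uniqP; rewrite size_map size_iota => HN.
  by move: (max_card (mem (map w (iota 0 N)))); rewrite HN ltnn.
move/(uniqPn (w 0)) => [i1 [j1 [Hij Hj]]]; rewrite size_map size_iota in Hj.
rewrite !(nth_map 0) ?size_iota ?(ltn_trans Hij) // !nth_iota ?(ltn_trans Hij) //.
rewrite !add0n => Heq.
apply: (key (j1 - i1) i1); first by rewrite subn_gt0.
by rewrite subnKC ?(ltnW Hij).
Qed.
End Walk.
Section IC.
Variables (E : finType) (conf : rel E).
Hypothesis conf_sym : symmetric conf.
Hypothesis conf_irr : irreflexive conf.

Definition indep (S : {set E}) := [forall x in S, forall y in S, ~~ conf x y].
Definition IC (A : {set E}) := [set S : {set E} | (S \subset A) && indep S].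

Lemma indepP (S : {set E}) : reflect (forall x y, x \in S -> y \in S -> ~~ conf x y) (indep S).
Proof.
apply: (iffP forall_inP) => [H x y Hx Hy | H x Hx].
  by move/forall_inP: (H x Hx); apply.
by apply/forall_inP => y Hy; apply: H.
Qed.

Hypothesis Hsh : forall A : {set E}, ~~ indep A ->
  exists g e, [/\ g \in A, e \in A, conf g e &
     forall h, h \in A -> conf g h -> h = e \/ conf e h].

Lemma IC_vd A : vertex_decomposable (IC A).
Proof.
have [n] := ubnP #|A|; elim: n A => // n IH A HA.
case: (boolP (indep A)) => [HiA | /Hsh [g [e [Hg He Hge Hsimp]]]].
  have -> : IC A = powerset A.
    apply/setP => S; rewrite inE powersetE.
    case: (boolP (S \subset A)) => //= /subsetP HS.
    by apply/indepP => x y Hx Hy; move/indepP: HiA; apply; apply: HS.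
  exact: vd_simplex.
pose A1 := [set h in A | (h != e) && ~~ conf e h].
have HeA1 : e \notin A1 by rewrite inE eqxx andbF.
have lkE : lk e (IC A) = IC A1.
  apply/setP => S; rewrite !inE.
  apply/idP/idP.
  - case/and3P => /andP [HSA HiS] HeS /andP [HeSA /indepP HeSi].
    rewrite HiS andbT; apply/subsetP => h Hh; rewrite inE (subsetP HSA) //=.
    rewrite HeSi ?setU11 ?setU1r // andbT.
    by apply: contraNneq HeS => <-.
  - case/andP => /subsetP HS /indepP HiS.
    have HeS : e \notin S by apply: contra HeA1 => /HS.
    have HSA : S \subset A by apply/subsetP => h /HS; rewrite inE => /andP [].
    rewrite HSA HeS /=; apply/andP; split; first by apply/indepP.
    rewrite subUset sub1set He HSA /=.
    apply/indepP => x y; rewrite !inE => /predU1P [->|Hx] /predU1P [->|Hy].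
    + by rewrite conf_irr.
    + by move: (HS y Hy); rewrite inE => /and3P [].
    + by move: (HS x Hx); rewrite inE conf_sym => /and3P [].
    + exact: HiS.
have delE : del e (IC A) = IC (A :\ e).
  apply/setP => S; rewrite !inE subsetD1 -andbA.
  by case: (S \subset A); case: (indep S); case: (e \in S).
apply: (@vd_shed _ _ e).
- rewrite inE sub1set He /=; apply/indepP => x y; rewrite !inE => /eqP-> /eqP->.
  by rewrite conf_irr.
- rewrite lkE; apply: IH; rewrite -ltnS; apply: leq_trans HA.
  rewrite ltnS; apply: proper_card; rewrite properEneq; apply/andP; split.
    by apply: contraNneq HeA1 => ->.
  by apply/subsetP => h; rewrite inE => /andP [].
- rewrite delE; apply: IH; rewrite -ltnS; apply: leq_trans HA.
  by rewrite ltnS; apply: proper_card; apply: properD1.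
- move=> F; rewrite delE => [[HF Hmax]]; split.
    move: HF; rewrite !inE => /andP [HFA ->]; rewrite andbT.
    by apply: subset_trans HFA (subsetDl _ _).
  move=> G HG HFG.
  move: HF HG; rewrite !inE => /andP [HFA HiF] /andP [HGA HiG].
  case: (boolP (e \in G)) => HeG; last first.
    by apply: Hmax => //; rewrite inE subsetD1 HGA HeG HiG.
  exfalso.
  have HeF : e \notin F by move: HFA; rewrite subsetD1 => /andP [].
  have HgF : g \notin F.
    apply/negP => /(subsetP HFG) HgG.
    by move/indepP: HiG => /(_ g e HgG HeG); rewrite Hge.
  have Hge' : g != e by apply: contraTneq Hge => ->; rewrite conf_irr.
  have : g |: F = F.
    apply: Hmax; last exact: subsetUr.
    rewrite inE subUset sub1set !inE Hge' Hg HFA /=.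
    apply/indepP => x y; rewrite !inE => /predU1P [->|Hx] /predU1P [->|Hy].
    + by rewrite conf_irr.
    + apply/negP => Hc; case: (Hsimp y (subsetP (subset_trans HFA (subsetDl _ _)) y Hy) Hc).
        by move=> Hye; move: HeF; rewrite -Hye Hy.
      by move/indepP: HiG => /(_ e y HeG (subsetP HFG y Hy)) /negP.
    + apply/negP; rewrite conf_sym => Hc.
      case: (Hsimp x (subsetP (subset_trans HFA (subsetDl _ _)) x Hx) Hc).
        by move=> Hxe; move: HeF; rewrite -Hxe Hx.
      by move/indepP: HiG => /(_ e x HeG (subsetP HFG x Hx)) /negP.
    + by move/indepP: HiF; apply.
  by move=> HgFF; move: HgF; rewrite -HgFF setU11.
Qed.
End IC.

Section Main.
Variables (V E : finType) (s t : E -> V).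
Hypothesis HF : multidiforest s t.

Definition dconf : rel E := fun x y =>
  (x != y) && ((t x == t y) || ((s x == t y) && (t x == s y))).

Lemma dconf_sym : symmetric dconf.
Proof.
move=> x y; rewrite /dconf eq_sym; congr (_ && _); rewrite (eq_sym (t x)).
by congr (_ || _); rewrite andbC (eq_sym (s x)) (eq_sym (t x)).
Qed.

Lemma dconf_irr : irreflexive dconf.
Proof. by move=> x; rewrite /dconf eqxx. Qed.

Lemma noloop e : s e != t e.
Proof.
apply/negP => /eqP He; case: HF => Hl _; move: (Hl (s e)) => /negP; apply.
by apply/existsP; exists e; rewrite He eqxx.
Qed.

Lemma dicycle_pair x y : s y = t x -> t y = s x ->
  is_dicycle s t [set s x; t x] [set x; y].
Proof.
move=> Hsy Hty.
have Hnl := noloop x.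
have Hxy : x != y by apply: contraNneq Hnl => Exy; rewrite {1}Exy Hsy.
have Hadj1 : adj_in s t [set x; y] (s x) (t x).
  by apply/existsP; exists x; rewrite !inE !eqxx.
have Hadj2 : adj_in s t [set x; y] (t x) (s x).
  by apply/existsP; exists x; rewrite !inE !eqxx orbT.
apply/and4P; split.
- by apply/set0Pn; exists (s x); rewrite !inE eqxx.
- apply/forall_inP => e; rewrite !inE => /orP [] /eqP ->.
    by rewrite !eqxx orbT.
  by rewrite Hsy Hty !eqxx orbT.
- have Hnl' : t x != s x by rewrite eq_sym.
  have Hyx : y != x by rewrite eq_sym.
  apply/forall_inP => v; rewrite !inE => /orP [] /eqP ->; apply/andP; split;
  [apply/cards1P; exists x | apply/cards1P; exists y | apply/cards1P; exists y | apply/cards1P; exists x];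
  apply/setP => e; rewrite !inE;
  (case: (eqVneq e x) => [->|Hex]; [rewrite (negbTE Hxy) | case: (eqVneq e y) => [->|Hey]]);
  rewrite /= ?Hsy ?Hty ?eqxx ?(negbTE Hnl) ?(negbTE Hnl') ?(negbTE Hxy) ?(negbTE Hyx) ?andbF //.
- apply/forall_inP => a; rewrite !inE => /orP [] /eqP ->;
  apply/forall_inP => b; rewrite !inE => /orP [] /eqP ->;
  by rewrite ?connect0 ?connect1.
Qed.

Lemma DT_IC : DT s t = IC dconf [set: E].
Proof.
apply/setP => S; rewrite !inE subsetT /=; apply/idP/idP.
- case/andP => Hnc Htg; apply/indepP => x y Hx Hy; apply/negP => /andP [Hxy].
  case/orP => [Ht | /andP [/eqP H1 /eqP H2]].
    by move/forall_inP: Htg => /(_ x Hx) /forall_inP /(_ y Hy); rewrite Ht (negbTE Hxy).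
  move/existsP: Hnc; apply; exists [set s x; t x]; apply/existsP; exists [set x; y].
  rewrite dicycle_pair // andbT; apply/subsetP => e; rewrite !inE.
  by case/orP => /eqP ->.
- move/indepP => Hi; apply/andP; split; last first.
    apply/forall_inP => x Hx; apply/forall_inP => y Hy; apply/implyP => Ht.
    case: (eqVneq x y) => // Hxy; move: (Hi x y Hx Hy); rewrite /dconf Hxy Ht.
    by [].
  apply/existsPn => W; apply/existsPn => D; apply/negP => /andP [/subsetP HDS].
  case/and4P => /set0Pn [v0 Hv0] /forall_inP HDW /forall_inP Hcard _.
  pose f v := if [pick e in D | s e == v] is Some e then t e else v.
  have F1 : forall v, v \in W -> exists2 e, e \in D & (s e = v) /\ (f v = t e).
    move=> v Hv; rewrite /f; case: pickP => [e /andP [HeD /eqP Hse] | Hn].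
      by exists e.
    exfalso; move: (Hcard v Hv) => /andP [/cards1P [e0 He0] _].
    have : e0 \in [set e in D | s e == v] by rewrite He0 set11.
    by rewrite inE => He0'; move: (Hn e0); rewrite He0'.
  pose w i := iter i f v0.
  have HwW : forall i, w i \in W.
    elim => [|i IH] //=; case: (F1 _ IH) => e HeD [_ ->].
    by case/andP: (HDW e HeD).
  apply: (nb_walk HF (w := w)).
  + move=> i; case: (F1 _ (HwW i)) => e HeD [Hse Hfe].
    by apply/existsP; exists e; rewrite /= Hse Hfe !eqxx.
  + move=> i; apply/negP => /eqP Heq.
    case: (F1 _ (HwW i)) => e1 He1D [Hs1 Hf1].
    case: (F1 _ (HwW i.+1)) => e2 He2D [Hs2 Hf2].
    have Hne : e1 != e2.
      apply: contraNneq (noloop e1) => Hee.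
      by apply/eqP; rewrite {1}Hee Hs2 -Hf1.
    have H1 : s e1 = t e2 by rewrite Hs1 -Hf2 -[w i]Heq.
    have H2 : t e1 = s e2 by rewrite -Hf1 Hs2.
    move: (Hi e1 e2 (HDS _ He1D) (HDS _ He2D)); rewrite /dconf Hne /=.
    by rewrite H1 H2 !eqxx orbT.
Qed.

Lemma L_step (A : {set E}) g e h : g \in A -> e \in A -> h \in A ->
  dconf g e -> dconf g h -> h != e -> ~~ dconf e h ->
  (exists2 h1, h1 \in A & (s h1 = t g) /\ (t h1 = s g)) /\
  (exists2 k, k \in A & (t k = t g) /\ (s k != s g)).
Proof.
move=> Hg He Hh /andP [Hge Hce] /andP [Hgh Hch] Hhe Hn.
have Heh : e != h by rewrite eq_sym.
move: Hn; rewrite /dconf Heh /=.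
case/orP: Hce => [/eqP Hte | /andP [/eqP Hse /eqP Hte]];
case/orP: Hch => [/eqP Hth | /andP [/eqP Hsh /eqP Hth]].
- by rewrite -Hte -Hth eqxx.
- move=> Hn; split; first by exists h.
  exists e => //; split => //; apply: contra Hn => /eqP Hes.
  by rewrite -Hte Hes Hsh Hth !eqxx orbT.
- move=> Hn; split; first by exists e.
  exists h => //; split => //; apply: contra Hn => /eqP Hhs.
  by rewrite -Hth -Hse -Hte Hhs !eqxx orbT.
- by rewrite -Hse -Hsh eqxx.
Qed.

Lemma Hsh_dconf (A : {set E}) : ~~ indep dconf A ->
  exists g e, [/\ g \in A, e \in A, dconf g e &
     forall h, h \in A -> dconf g h -> h = e \/ dconf e h].
Proof.
move=> HnA.
case: (boolP [exists g, exists e, [&& g \in A, e \in A, dconf g e &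
     [forall h in A, dconf g h ==> (h == e) || dconf e h]]]).
  case/existsP => g /existsP [e /and4P [Hg He Hge /forall_inP Hh]].
  exists g, e; split => // h HhA Hgh; move: (Hh h HhA); rewrite Hgh /=.
  by case/orP => [/eqP ->|]; [left | right].
move=> Hno; exfalso.
have Hns : forall g e, g \in A -> e \in A -> dconf g e ->
    exists2 h, h \in A & [&& dconf g h, h != e & ~~ dconf e h].
  move=> g e Hg He Hge; move/existsPn: Hno => /(_ g) /existsPn /(_ e).
  rewrite Hg He Hge /= => /forall_inPn [h HhA]; rewrite negb_imply negb_or.
  by move=> H; exists h.
pose nonisol k := [exists e in A, dconf k e].
have Lg : forall g, g \in A -> nonisol g ->
    (exists2 h1, h1 \in A & (s h1 = t g) /\ (t h1 = s g)) /\
    (exists2 k, k \in A & (t k = t g) /\ (s k != s g)).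
  move=> g Hg /exists_inP [e He Hge].
  case: (Hns g e Hg He Hge) => h Hh /and3P [Hgh Hhe Hn].
  exact: (L_step Hg He Hh Hge Hgh Hhe Hn).
have step : forall g, g \in A -> nonisol g ->
    exists k, [&& k \in A, nonisol k, t k == s g & s k != t g].
  move=> g Hg Hng; case: (Lg g Hg Hng) => [[h1 Hh1 [Hsh1 Hth1]] _].
  have Hnh1 : nonisol h1.
    apply/exists_inP; exists g => //; rewrite /dconf Hsh1 Hth1 !eqxx orbT andbT.
    by apply: contraNneq (noloop g) => Hhg; rewrite -{1}Hhg Hsh1.
  case: (Lg h1 Hh1 Hnh1) => [_ [k Hk [Htk Hsk]]].
  exists k; rewrite Hk Htk Hth1 eqxx -Hsh1 Hsk /= andbT.
  apply/exists_inP; exists h1 => //; rewrite /dconf Htk eqxx orTb andbT.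
  by apply: contraNneq Hsk => ->.
pose P g k := [&& k \in A, nonisol k, t k == s g & s k != t g].
pose next g := if [pick k | P g k] is Some k then k else g.
have Hnext : forall g, g \in A -> nonisol g -> P g (next g).
  move=> g Hg Hng; rewrite /next; case: pickP => // Hn.
  by case: (step g Hg Hng) => k Hk; move: (Hn k); rewrite /P Hk.
have [g0 Hg0 Hng0] : exists2 g0, g0 \in A & nonisol g0.
  move/forall_inPn: HnA => [x Hx /forall_inPn [y Hy]]; rewrite negbK => Hc.
  by exists x => //; apply/exists_inP; exists y.
pose gs i := iter i next g0.
have Hinv : forall i, (gs i \in A) && nonisol (gs i).
  elim => [|i /andP [IH1 IH2]]; first by rewrite Hg0 Hng0.
  by case/and4P: (Hnext _ IH1 IH2) => /= -> ->.
have HP : forall i, P (gs i) (gs i.+1).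
  by move=> i; case/andP: (Hinv i) => H1 H2; exact: Hnext.
apply: (nb_walk HF (w := fun i => t (gs i))).
- move=> i; case/and4P: (HP i) => _ _ /eqP -> _.
  by apply/existsP; exists (gs i); rewrite !eqxx orbT.
- move=> i; case/and4P: (HP i.+1) => _ _ /eqP -> _.
  by case/and4P: (HP i).
Qed.

Theorem theorem5p2' : vertex_decomposable (DT s t).
Proof.
rewrite DT_IC; apply: IC_vd; [exact: dconf_sym | exact: dconf_irr | exact: Hsh_dconf].
Qed.
End Main.

Theorem theorem5p2 (V E : finType) (s t : E -> V) :
  multidiforest s t -> vertex_decomposable (DT s t).
Proof. move=> HF; exact: theorem5p2'. Qed.
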